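(* Let $f:\mathbb{R}\to\mathbb{R}^T$ be a function each of whose outputs $f_t$ is continuous piecewise linear and interpolates the dataset $\mathcal{D}_t=\{(x_i,y_{it})\}_{i=1}^N$. Suppose that at some point $\tilde x$ lying strictly between consecutive data points, one or more of the outputs $f_t$ has a knot. Let $\tilde x_1<\tilde x<\tilde x_2$ be the closest knots of $f$ (in any output) before and after $\tilde x$, let $\tau=\frac{\tilde x-\tilde x_1}{\tilde x_2-\tilde x_1}$, and suppose the slopes of each $f_t$ are: $a_t$ immediately to the left of $\tilde x_1$, $b_t+\delta_t$ on $(\tilde x_1,\tilde x)$, $b_t-\frac{\tau}{1-\tau}\delta_t$ on $(\tilde x,\tilde x_2)$, and $c_t$ immediately to the right of $\tilde x_2$. Let $\mathbf{a},\mathbf{b},\mathbf{c},\boldsymbol\delta\in\mathbb{R}^T$ collect these values. Then replacing $f$ on $[\tilde x_1,\tilde x_2]$ by the straight line connecting $f(\tilde x_1)$ and $f(\tilde x_2)$ (i.e., removing the knot at $\tilde x$) does not increase $R(f)$. Furthermore, if $\mathbf{a}-\mathbf{b}$ and $\mathbf{b}-\mathbf{c}$ are not aligned, doing so strictly decreases $R(f)$.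
   Context: Networks: $f_\theta(x)=\sum_{k=1}^K \mathbf{v}_k(w_kx+b_k)_+ + \mathbf{a}_0x+\mathbf{c}_0$ with $w_k,b_k\in\mathbb{R}$, $\mathbf{v}_k,\mathbf{a}_0,\mathbf{c}_0\in\mathbb{R}^T$, $K$ a fixed width, $(z)_+=\max\{0,z\}$. The representational cost of a function $f:\mathbb{R}\to\mathbb{R}^T$ is $R(f)=\inf_\theta \sum_{k=1}^K\|\mathbf{v}_k\|_2$ subject to $|w_k|=1$ for all $k$ and $f=f_\theta$. A knot of $f_t$ is a point where the slope of $f_t$ changes. Two vectors $\mathbf{u}_1,\mathbf{u}_2$ are aligned if $\mathbf{u}_1^\top\mathbf{u}_2=\|\mathbf{u}_1\|_2\|\mathbf{u}_2\|_2$. By construction the straight line from $(\tilde x_1,f_t(\tilde x_1))$ to $(\tilde x_2,f_t(\tilde x_2))$ has slope $b_t$. *)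

(* Defs.v *)
From HB Require Import structures.
From mathcomp Require Import all_boot all_order all_algebra.
From mathcomp Require Import all_classical all_reals all_analysis.
Set Implicit Arguments. Unset Strict Implicit. Unset Printing Implicit Defensive.
Import Order.TTheory GRing.Theory Num.Theory numFieldNormedType.Exports.
Local Open Scope ring_scope.
Local Open Scope classical_set_scope.

Section Defs.
Variable R : realType.

Definition norm2 (T : nat) (u : 'I_T -> R) : R := Num.sqrt (\sum_(t < T) u t ^+ 2).
Definition dotv (T : nat) (u v : 'I_T -> R) : R := \sum_(t < T) u t * v t.
Definition aligned (T : nat) (u1 u2 : 'I_T -> R) : Prop :=
  dotv u1 u2 = norm2 u1 * norm2 u2.

Definition net (K T : nat) (w b : 'I_K -> R) (v : 'I_K -> 'I_T -> R)
  (a0 c0 : 'I_T -> R) : R -> 'I_T -> R :=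
  fun x t => \sum_(k < K) v k t * Num.max 0 (w k * x + b k) + a0 t * x + c0 t.

(* Representational cost R(f) (infimum in extended reals; +oo if f is not
   representable by a width-K network). *)
Definition repcost (K T : nat) (f : R -> 'I_T -> R) : \bar R :=
  ereal_inf [set r : \bar R | exists (w b : 'I_K -> R) (v : 'I_K -> 'I_T -> R)
      (a0 c0 : 'I_T -> R),
      (forall k, `|w k| = 1) /\ f = net w b v a0 c0 /\
      r = (\sum_(k < K) norm2 (v k))%:E].

Definition is_knot (g : R -> R) (p : R) : Prop :=
  ~ (exists e : R, 0 < e /\ exists al be : R,
        forall x, `|x - p| < e -> g x = al * x + be).

Definition cpwl (g : R -> R) : Prop :=
  continuous g /\ exists S : seq R, forall p, is_knot g p -> p \in S.

Definition fknot (T : nat) (f : R -> 'I_T -> R) (p : R) : Prop :=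
  exists t, is_knot (fun x => f x t) p.

Definition slope_on (g : R -> R) (l r s : R) : Prop :=
  forall x y, l < x < r -> l < y < r -> g y - g x = s * (y - x).
Definition slope_left (g : R -> R) (p s : R) : Prop :=
  exists2 e : R, 0 < e & slope_on g (p - e) p s.
Definition slope_right (g : R -> R) (p s : R) : Prop :=
  exists2 e : R, 0 < e & slope_on g p (p + e) s.

Definition remove_knot (T : nat) (f : R -> 'I_T -> R) (x1 x2 : R) : R -> 'I_T -> R :=
  fun x t => if (x1 <= x) && (x <= x2)
             then f x1 t + (x - x1) / (x2 - x1) * (f x2 t - f x1 t)
             else f x t.

End Defs.

(* Main.v *)
Require Import Defs.
From HB Require Import structures.
From mathcomp Require Import all_boot all_order all_algebra.
From mathcomp Require Import all_classical all_reals all_analysis.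
From mathcomp Require Import ring lra.
Import Order.TTheory GRing.Theory Num.Theory.
Local Open Scope ring_scope.

Section Norms.
Context {R : realType}.
Context {T : nat}.
Implicit Types u v : 'I_T -> R.

Definition sq u := \sum_(t < T) u t ^+ 2.
Lemma sq_ge0 u : 0 <= sq u.
Proof. by apply: sumr_ge0 => t _; rewrite sqr_ge0. Qed.
Lemma norm2_ge0 u : 0 <= norm2 u.
Proof. exact: sqrtr_ge0. Qed.
Lemma norm2_sq u : norm2 u ^+ 2 = sq u.
Proof. by rewrite /norm2 sqr_sqrtr // sq_ge0. Qed.
Lemma norm2_ext u v : (forall t, u t = v t) -> norm2 u = norm2 v.
Proof. by move=> h; congr norm2; apply: funext. Qed.
Lemma norm2_eq0 u : norm2 u = 0 -> forall t, u t = 0.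
Proof.
move=> h t; have : sq u = 0 by rewrite -norm2_sq h expr0n.
move=> /psumr_eq0P h2; have := h2 (fun t _ => sqr_ge0 (u t)) t isT.
by move/eqP; rewrite sqrf_eq0 => /eqP.
Qed.
Lemma norm2_zero : norm2 (fun _ : 'I_T => 0 : R) = 0.
Proof. by rewrite /norm2 big1 ?sqrtr0 // => t _; rewrite expr0n. Qed.
Lemma norm2_scale (l : R) u : norm2 (fun t => l * u t) = `|l| * norm2 u.
Proof.
rewrite /norm2 (eq_bigr (fun t => l ^+ 2 * u t ^+ 2)); last by move=> t _; rewrite exprMn.
by rewrite -mulr_sumr sqrtrM ?sqr_ge0 // sqrtr_sqr.
Qed.
Lemma norm2_opp u : norm2 (fun t => - u t) = norm2 u.
Proof.
rewrite (norm2_ext _ (fun t => (-1) * u t)); last by move=> t; rewrite mulN1r.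
by rewrite norm2_scale normrN normr1 mul1r.
Qed.

Lemma cs_expand u v :
  \sum_(t < T) (u t * norm2 v - v t * norm2 u) ^+ 2 =
  2 * norm2 u * norm2 v * (norm2 u * norm2 v - dotv u v).
Proof.
rewrite (eq_bigr (fun t => norm2 v ^+ 2 * u t ^+ 2 - (2 * norm2 u * norm2 v) * (u t * v t) + norm2 u ^+ 2 * v t ^+ 2)); last first.
  by move=> t _; ring.
rewrite big_split /= sumrB -!mulr_sumr.
rewrite -/(sq u) -/(sq v) -norm2_sq -norm2_sq /dotv; ring.
Qed.

Lemma cs u v : dotv u v <= norm2 u * norm2 v.
Proof.
have := cs_expand u v.
have h0 : 0 <= \sum_(t < T) (u t * norm2 v - v t * norm2 u) ^+ 2.
  by apply: sumr_ge0 => t _; rewrite sqr_ge0.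
have [hu|hu] := eqVneq (norm2 u) 0.
  have z := @norm2_eq0 u hu.
  have -> : dotv u v = 0 by rewrite /dotv big1 // => t _; rewrite z mul0r.
  by move=> _; rewrite hu mul0r.
have [hv|hv] := eqVneq (norm2 v) 0.
  have z := @norm2_eq0 v hv.
  have -> : dotv u v = 0 by rewrite /dotv big1 // => t _; rewrite z mulr0.
  by move=> _; rewrite hv mulr0.
have pu : 0 < norm2 u by rewrite lt0r norm2_ge0 andbT.
have pv : 0 < norm2 v by rewrite lt0r norm2_ge0 andbT.
move=> e; rewrite e in h0.
rewrite -subr_ge0; move: h0; rewrite pmulr_rge0 //.
by rewrite !mulr_gt0.

Qed.

Lemma norm2_tri u v : norm2 (fun t => u t + v t) <= norm2 u + norm2 v.
Proof.
rewrite -(ler_pXn2r (n:=2)) ?nnegrE ?addr_ge0 ?norm2_ge0 //.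
rewrite norm2_sq /sq (eq_bigr (fun t => u t ^+ 2 + 2 * (u t * v t) + v t ^+2)); last by move=> t _; ring.
rewrite !big_split /= -mulr_sumr -/(sq u) -/(sq v) -!norm2_sq -/(dotv u v).
have := cs u v; nra.
Qed.

Lemma norm2_tri_eq u v : norm2 (fun t => u t + v t) = norm2 u + norm2 v ->
  dotv u v = norm2 u * norm2 v.
Proof.
move=> h.
have : norm2 (fun t => u t + v t) ^+ 2 = (norm2 u + norm2 v) ^+ 2 by rewrite h.
rewrite norm2_sq /sq (eq_bigr (fun t => u t ^+ 2 + 2 * (u t * v t) + v t ^+2)); last by move=> t _; ring.
rewrite !big_split /= -mulr_sumr -/(sq u) -/(sq v) -!norm2_sq -/(dotv u v).
move=> e; lra.
Qed.

Lemma cs_eq u v : dotv u v = norm2 u * norm2 v -> norm2 v != 0 ->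
  forall t, u t = norm2 u / norm2 v * v t.
Proof.
move=> h hv t.
have := cs_expand u v; rewrite h subrr mulr0 => /psumr_eq0P H.
have := H (fun t _ => sqr_ge0 _) t isT.
move/eqP; rewrite sqrf_eq0 subr_eq0 => /eqP e.
apply: (mulIf hv); rewrite e; field; exact: hv.
Qed.

Lemma aligned_mul (l m : R) u : 0 <= l -> 0 <= m ->
  aligned (fun t => l * u t) (fun t => m * u t).
Proof.
move=> hl hm; rewrite /aligned !norm2_scale !ger0_norm // /dotv.
rewrite (eq_bigr (fun t => (l * m) * u t ^+ 2)); last by move=> t _; ring.
by rewrite -mulr_sumr -/(sq u) -norm2_sq; ring.
Qed.

Lemma norm2_sum (I : Type) (r : seq I) (P : pred I) (F : I -> 'I_T -> R) :
  norm2 (fun t => \sum_(i <- r | P i) F i t) <= \sum_(i <- r | P i) norm2 (F i).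
Proof.
elim: r => [|i r IH].
  by rewrite big_nil (norm2_ext _ (fun _ => 0)) ?norm2_zero // => t; rewrite big_nil.
rewrite big_cons; case: ifP => Pi.
  rewrite (norm2_ext _ (fun t => F i t + \sum_(j <- r | P j) F j t)); last first.
    by move=> t; rewrite big_cons Pi.
  by apply: le_trans (norm2_tri _ _) _; rewrite lerD2l.
rewrite (norm2_ext _ (fun t => \sum_(j <- r | P j) F j t)) //.
by move=> t; rewrite big_cons Pi.
Qed.

End Norms.

Section Gap.
Context {R : realType}.
Context {T : nat}.

Definition gapv (a b c d : 'I_T -> R) (q : R) :=
  norm2 (fun t => (b t + d t) - a t) + norm2 (fun t => (b t - q * d t) - (b t + d t))
  + norm2 (fun t => c t - (b t - q * d t))
  - norm2 (fun t => b t - a t) - norm2 (fun t => c t - b t).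

Lemma gap_lemma (a b c d : 'I_T -> R) (q : R) : 0 < q ->
  0 <= gapv a b c d q /\
  (gapv a b c d q = 0 -> (exists t, d t != 0) ->
     aligned (fun t => a t - b t) (fun t => b t - c t)).
Proof.
move=> hq.
set u := fun t => (b t + d t) - a t.
set u2 := fun t => c t - (b t - q * d t).
have E1 : norm2 (fun t => (b t - q * d t) - (b t + d t)) = (1 + q) * norm2 d.
  rewrite (norm2_ext _ (fun t => (- (1 + q)) * d t)); last by move=> t; ring.
  by rewrite norm2_scale normrN gtr0_norm //; lra.
have Nd : norm2 (fun t => - d t) = norm2 d by rewrite norm2_opp.
have Nqd : norm2 (fun t => - q * d t) = q * norm2 d.
  by rewrite norm2_scale normrN gtr0_norm.
have T1 : norm2 (fun t => b t - a t) = norm2 (fun t => u t + - d t).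
  by apply: norm2_ext => t; rewrite /u; ring.
have T2 : norm2 (fun t => c t - b t) = norm2 (fun t => u2 t + - q * d t).
  by apply: norm2_ext => t; rewrite /u2; ring.
have I1 := norm2_tri u (fun t => - d t).
have I2 := norm2_tri u2 (fun t => - q * d t).
rewrite /= in I1 I2.
rewrite Nd in I1; rewrite Nqd in I2.
have nd0 := norm2_ge0 d.
rewrite /gapv E1 T1 T2 -/u -/u2.
split; first lra.
move=> g0 [t0 ht0].
have eq1 : norm2 (fun t => u t + - d t) = norm2 u + norm2 (fun t => - d t) by rewrite Nd; lra.
have eq2 : norm2 (fun t => u2 t + - q * d t) = norm2 u2 + norm2 (fun t => - q * d t) by rewrite Nqd; lra.
have nd : norm2 d != 0.
  apply/eqP => h; move: ht0; by rewrite (@norm2_eq0 _ _ d h t0) eqxx.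
have nd1 : norm2 (fun t => - d t) != 0 by rewrite Nd.
have nd2 : norm2 (fun t => - q * d t) != 0 by rewrite Nqd mulf_neq0 // gt_eqF.
have c1 := cs_eq _ _ (norm2_tri_eq _ _ eq1) nd1.
have c2 := cs_eq _ _ (norm2_tri_eq _ _ eq2) nd2.
set l := norm2 u / norm2 (fun t => - d t) in c1.
set m := norm2 u2 / norm2 (fun t => - q * d t) in c2.
have hl : 0 <= l by rewrite /l divr_ge0 // norm2_ge0.
have hm : 0 <= m by rewrite /m divr_ge0 // norm2_ge0.
have -> : (fun t => a t - b t) = (fun t => (1 + l) * d t).
  apply: funext => t; have := c1 t; rewrite /u => e; lra.
have -> : (fun t => b t - c t) = (fun t => ((1 + m) * q) * d t).
  apply: funext => t; have := c2 t; rewrite /u2 => e; lra.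
apply: aligned_mul; [lra| ].
by apply: mulr_ge0; lra.
Qed.

End Gap.

Set Implicit Arguments. Unset Strict Implicit.

Section OneD.
Context {R : realType}.
Implicit Types g : R -> R.

Lemma max0_pos (y : R) : 0 <= y -> Num.max 0 y = y.
Proof. by move=> h; rewrite max_r. Qed.
Lemma max0_neg (y : R) : y <= 0 -> Num.max 0 y = 0.
Proof. by move=> h; rewrite max_l. Qed.

Lemma pick_min (e f : R) : 0 < e -> 0 < f -> exists m, [/\ 0 < m, m <= e & m <= f].
Proof.
move=> he hf; case: (leP e f) => h; [exists e | exists f]; split => //; lra.
Qed.

Lemma slope_on_sub g l r s l' r' : slope_on g l r s -> l <= l' -> r' <= r ->
  slope_on g l' r' s.
Proof.
move=> h h1 h2 x y /andP [hx1 hx2] /andP [hy1 hy2]; apply: h; apply/andP; split; lra.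
Qed.

Lemma slope_id g l r s al bl : l < r -> slope_on g l r s ->
  (forall x, l < x < r -> g x = al * x + bl) -> s = al.
Proof.
move=> hlr hs hg.
set x := l + (r - l) / 3; set y := l + (r - l) * 2 / 3.
have hx : l < x < r by apply/andP; rewrite /x; split; lra.
have hy : l < y < r by apply/andP; rewrite /y; split; lra.
have := hs x y hx hy; rewrite (hg x hx) (hg y hy).
have hne : y - x != 0 by rewrite /x /y; apply/eqP; lra.
move=> e; apply: (mulIf hne); rewrite -e; ring.
Qed.

Definition LF g (p e S al be : R) :=
  forall x, `|x - p| < e -> g x = S * Num.max 0 (x - p) + al * x + be.

Lemma LF_left g p e S al be : LF g p e S al be ->
  forall x, p - e < x <= p -> g x = al * x + be.
Proof.
move=> h x /andP [h1 h2]; rewrite h.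
  by rewrite max0_neg ?mulr0 ?add0r //; lra.
rewrite ler0_norm; [lra|lra].
Qed.

Lemma LF_right g p e S al be : LF g p e S al be ->
  forall x, p <= x < p + e -> g x = (S + al) * x + (be - S * p).
Proof.
move=> h x /andP [h1 h2]; rewrite h.
  by rewrite max0_pos; [ring|lra].
rewrite ger0_norm; [lra|lra].
Qed.

Lemma LF_slope_left g p e S al be l s : LF g p e S al be -> 0 < e -> l < p ->
  slope_on g l p s -> s = al.
Proof.
move=> h he hl hs.
have [m [hm1 hm2 hm3]] : exists m, [/\ 0 < m, m <= e & m <= p - l] by apply: pick_min; lra.
apply: (@slope_id g (p - m) p s al be); first lra.
  by apply: slope_on_sub hs _ _; lra.
move=> x /andP [h1 h2]; apply: (LF_left h); apply/andP; split; lra.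
Qed.

Lemma LF_slope_right g p e S al be r s : LF g p e S al be -> 0 < e -> p < r ->
  slope_on g p r s -> s = S + al.
Proof.
move=> h he hr hs.
have [m [hm1 hm2 hm3]] : exists m, [/\ 0 < m, m <= e & m <= r - p] by apply: pick_min; lra.
apply: (@slope_id g p (p + m) s (S + al) (be - S * p)); first lra.
  by apply: slope_on_sub hs _ _; lra.
move=> x /andP [h1 h2]; apply: (LF_right h); apply/andP; split; lra.
Qed.

Lemma LF_slope_left' g p e S al be s : LF g p e S al be -> 0 < e ->
  slope_left g p s -> s = al.
Proof.
move=> h he [e' he' hs]; apply: (LF_slope_left h he _ hs); lra.
Qed.

Lemma LF_slope_right' g p e S al be s : LF g p e S al be -> 0 < e ->
  slope_right g p s -> s = S + al.
Proof.
move=> h he [e' he' hs]; apply: (LF_slope_right h he _ hs); lra.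
Qed.

Lemma LF_knot g p e S al be : LF g p e S al be -> 0 < e -> is_knot g p -> S != 0.
Proof.
move=> h he hk; apply/eqP => hS; apply: hk; exists e; split => //.
exists al, be => x hx; rewrite h // hS mul0r add0r //.
Qed.

Lemma extend_slope g l r s e1 e2 al bl ar br :
  l < r -> 0 < e1 -> 0 < e2 -> slope_on g l r s ->
  (forall x, l <= x < l + e1 -> g x = al * x + bl) ->
  (forall x, r - e2 < x <= r -> g x = ar * x + br) ->
  forall x, l <= x <= r -> g x = g l + s * (x - l).
Proof.
move=> hlr he1 he2 hs hL hR.
have [m [hm1 hm2 hm3]] : exists m, [/\ 0 < m, m <= e1 & m <= r - l] by apply: pick_min; lra.
have sal : s = al.
  apply: (@slope_id g l (l + m) s al bl); first lra.
    by apply: slope_on_sub hs _ _; lra.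
  by move=> x /andP [h1 h2]; apply: hL; apply/andP; split; lra.
set y := l + m / 2.
have hy : l < y < r by apply/andP; rewrite /y; split; lra.
have gy : g y = g l + s * (y - l).
  rewrite hL; last by apply/andP; rewrite /y; split; lra.
  rewrite hL; last by apply/andP; split; lra.
  rewrite sal; ring.
have inner : forall x, l < x < r -> g x = g l + s * (x - l).
  by move=> x hx; have := hs y x hy hx; rewrite gy => e; lra.
move=> x /andP [h1 h2].
have [->|hxl] := eqVneq x l; first by rewrite subrr mulr0 addr0.
have [hxr|hxr] := eqVneq x r; last by apply: inner; apply/andP; split; [rewrite lt_neqAle eq_sym hxl h1|rewrite lt_neqAle hxr h2].
rewrite hxr.
have [m' [hm1' hm2' hm3']] : exists m, [/\ 0 < m, m <= e2 & m <= r - l] by apply: pick_min; lra.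
have sar : s = ar.
  apply: (@slope_id g (r - m') r s ar br); first lra.
    by apply: slope_on_sub hs _ _; lra.
  by move=> z /andP [z1 z2]; apply: hR; apply/andP; split; lra.
set z := r - m' / 2.
have hz : l < z < r by apply/andP; rewrite /z; split; lra.
have gz := inner z hz.
have g1 : g r = ar * r + br by rewrite hR //; apply/andP; split; lra.
have g2 : g z = ar * z + br by rewrite hR //; apply/andP; rewrite /z; split; lra.
rewrite sar in gz; rewrite sar; nra.
Qed.

End OneD.

Section Net.
Context {R : realType}.
Context {K : nat}.

Lemma unit_dec (w0 b0 x : R) : `|w0| = 1 ->
  Num.max 0 (w0 * x + b0) =
  Num.max 0 (x - (- b0 * w0)) - (1 - w0) / 2 * (x - (- b0 * w0)).
Proof.
move/eqP; rewrite eqr_norml => /andP [/orP [/eqP->|/eqP->] _].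
  rewrite subrr mul0r mul0r subr0 mulr1 mul1r; congr (Num.max 0 _); ring.
have -> : (1 - -1) / 2 = 1 :> R by field.
rewrite mul1r.
have [h|h] := leP 0 (x - - b0 * -1).
  rewrite subrr max0_neg //; lra.
rewrite sub0r max0_pos; [ring|lra].
Qed.

Definition pk (w b : 'I_K -> R) k := - b k * w k.
Definition ck (w : 'I_K -> R) k := (1 - w k) / 2.

Lemma net_dec T w b (v : 'I_K -> 'I_T -> R) a0 c0 :
  (forall k, `|w k| = 1) -> forall x t,
  net w b v a0 c0 x t =
  \sum_(k < K) v k t * Num.max 0 (x - pk w b k)
  + (a0 t - \sum_(k < K) v k t * ck w k) * x
  + (c0 t + \sum_(k < K) v k t * ck w k * pk w b k).
Proof.
move=> hw x t; rewrite /net.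
rewrite (eq_bigr (fun k => v k t * Num.max 0 (x - pk w b k)
   - (v k t * ck w k) * x + v k t * ck w k * pk w b k)); last first.
  by move=> k _; rewrite unit_dec // /pk /ck; ring.
rewrite !big_split /= sumrN -mulr_suml; ring.
Qed.

Lemma exists_e (p : R) (P : 'I_K -> R) (r : seq 'I_K) :
  exists2 e, 0 < e & forall k, k \in r -> P k != p -> e <= `|P k - p|.
Proof.
elim: r => [|i r [e he IH]]; first by exists 1.
have [hi|hi] := eqVneq (P i) p.
  exists e => // k; rewrite inE => /orP [/eqP ->|hk]; first by rewrite hi eqxx.
  exact: IH.
have hpos : 0 < `|P i - p| by rewrite normr_gt0 subr_eq0.
have [m [hm1 hm2 hm3]] : exists m, [/\ 0 < m, m <= e & m <= `|P i - p|] by apply: pick_min.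
exists m => // k; rewrite inE => /orP [/eqP ->|hk] hne //.
exact: le_trans hm2 (IH k hk hne).
Qed.

Lemma local_form (V P : 'I_K -> R) (A B p : R) :
  exists2 e, 0 < e & exists al be,
   LF (fun x => \sum_(k < K) V k * Num.max 0 (x - P k) + A * x + B) p e
      (\sum_(k < K | P k == p) V k) al be.
Proof.
have [e he H] := exists_e p P (index_enum 'I_K).
exists e => //.
exists (A + \sum_(k < K | P k != p) (if P k < p then V k else 0)).
exists (B - \sum_(k < K | P k != p) (if P k < p then V k * P k else 0)).
move=> x hx /=.
rewrite (bigID (fun k => P k == p)) /=.
rewrite (eq_bigr (fun k => V k * Num.max 0 (x - p))); last first.
  by move=> k /eqP ->.
rewrite -mulr_suml.
rewrite [\sum_(k < K | P k != p) _](eq_bigr (fun k => (if P k < p then V k else 0) * x - (if P k < p then V k * P k else 0))); last first.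
  move=> k hk; have := H k (mem_index_enum k) hk.
  case: ifP => hlt.
    rewrite ltr0_norm ?subr_lt0 // => hle; rewrite max0_pos; [ring|].
    move: hx; rewrite ltr_norml => /andP [h1 h2]; lra.
  move/negbT: hlt; rewrite -leNgt => hle.
  have hlt' : p < P k by rewrite lt_neqAle eq_sym hk hle.
  rewrite gtr0_norm ?subr_gt0 // => hle2; rewrite max0_neg; [ring|].
  move: hx; rewrite ltr_norml => /andP [h1 h2]; lra.
rewrite sumrB -mulr_suml; ring.
Qed.

End Net.

Section Main.
Context {R : realType} {K T : nat}.

Lemma split3 (P : 'I_K -> R) (p1 p2 p3 : R) (phi : 'I_K -> R) :
  p1 != p2 -> p1 != p3 -> p2 != p3 ->
  \sum_(k < K) phi k = \sum_(k < K | P k == p1) phi k + \sum_(k < K | P k == p2) phi k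
    + \sum_(k < K | P k == p3) phi k
    + \sum_(k < K | (P k != p1) && (P k != p2) && (P k != p3)) phi k.
Proof.
move=> h12 h13 h23.
have E2 : \sum_(k < K | (P k != p1) && (P k == p2)) phi k = \sum_(k < K | P k == p2) phi k.
  apply: eq_bigl => k /=; case: (eqVneq (P k) p2) => [->|]; rewrite ?andbT ?andbF //.
  by rewrite eq_sym.
have E3 : \sum_(k < K | (P k != p1) && (P k != p2) && (P k == p3)) phi k = \sum_(k < K | P k == p3) phi k.
  apply: eq_bigl => k /=; case: (eqVneq (P k) p3) => [->|]; rewrite ?andbT ?andbF //.
  by rewrite eq_sym h13 eq_sym h23.
rewrite [LHS](bigID (fun k => P k == p1)) /=.
rewrite [\sum_(k < K | P k != p1) _](bigID (fun k => P k == p2)) /=.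
rewrite [\sum_(k < K | (P k != p1) && (P k != p2)) _](bigID (fun k => P k == p3)) /=.
by rewrite E2 E3 !addrA.
Qed.


Lemma construct (f : R -> 'I_T -> R) (xt xt1 xt2 : R) (a b c d : 'I_T -> R) (q : R)
  (w bb : 'I_K -> R) (v : 'I_K -> 'I_T -> R) (a0 c0 : 'I_T -> R) :
  xt1 < xt -> xt < xt2 -> q * (xt2 - xt) = xt - xt1 ->
  fknot f xt -> fknot f xt1 -> fknot f xt2 ->
  (forall t, slope_left (fun x => f x t) xt1 (a t)) ->
  (forall t, slope_on (fun x => f x t) xt1 xt (b t + d t)) ->
  (forall t, slope_on (fun x => f x t) xt xt2 (b t - q * d t)) ->
  (forall t, slope_right (fun x => f x t) xt2 (c t)) ->
  (forall k, `|w k| = 1) -> f = net w bb v a0 c0 ->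
  (exists t, d t != 0) /\
  exists v' a0' c0', remove_knot f xt1 xt2 = net w bb v' a0' c0' /\
     \sum_(k < K) norm2 (v' k) + gapv a b c d q <= \sum_(k < K) norm2 (v k).
Proof.
move=> h1 h2 hq kn kn1 kn2 hA hB hC hD hw hf.
set P := pk w bb.
set S := fun p t => \sum_(k < K | P k == p) v k t.
have LFt : forall t p, exists2 e, 0 < e & exists al be,
    LF (fun x => f x t) p e (S p t) al be.
  move=> t p.
  have [e he [al [be H]]] := local_form (fun k => v k t) P
     (a0 t - \sum_(k < K) v k t * ck w k) (c0 t + \sum_(k < K) v k t * ck w k * pk w bb k) p.
  exists e => //; exists al, be => x hx; rewrite hf net_dec //; exact: H.
have key : forall t, [/\ S xt1 t = b t + d t - a t,
     S xt t = (b t - q * d t) - (b t + d t),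
     S xt2 t = c t - (b t - q * d t),
     forall x, xt1 <= x <= xt -> f x t = f xt1 t + (b t + d t) * (x - xt1) &
     forall x, xt <= x <= xt2 -> f x t = f xt t + (b t - q * d t) * (x - xt)].
  move=> t.
  have [e1 he1 [al1 [be1 L1]]] := LFt t xt1.
  have [e he [al [be L]]] := LFt t xt.
  have [e2 he2 [al2 [be2 L2]]] := LFt t xt2.
  have i1 := LF_slope_left' L1 he1 (hA t).
  have i2 := LF_slope_right L1 he1 h1 (hB t).
  have i3 := LF_slope_left L he h1 (hB t).
  have i4 := LF_slope_right L he h2 (hC t).
  have i5 := LF_slope_left L2 he2 h2 (hC t).
  have i6 := LF_slope_right' L2 he2 (hD t).
  split.
  - rewrite i2 i1; ring.
  - rewrite i4 i3; ring.
  - rewrite i6 i5; ring.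
  - apply: (extend_slope h1 he1 he (hB t)).
      by move=> x hx; apply: (LF_right L1).
    by move=> x hx; apply: (LF_left L).
  - apply: (extend_slope h2 he he2 (hC t)).
      by move=> x hx; apply: (LF_right L).
    by move=> x hx; apply: (LF_left L2).
have exk : forall p, fknot f p -> exists k, P k == p.
  move=> p [t kt].
  have [e he [al [be L]]] := LFt t p.
  have := LF_knot L he kt.
  case: (pickP (fun k => P k == p)) => [k hk|h0]; first by exists k.
  by rewrite /S big_pred0 ?eqxx.
have dnz : exists t, d t != 0.
  case: kn => t kt; exists t.
  have [e he [al [be L]]] := LFt t xt.
  have := LF_knot L he kt; have [_ -> _ _ _] := key t.
  apply: contra => /eqP ->; apply/eqP; ring.
split => //.
have [k1 hk1] := exk _ kn1.
have [k2 hk2] := exk _ kn2.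
have n1 : xt1 != xt by rewrite lt_eqF.
have n12 : xt1 != xt2 by rewrite lt_eqF //; lra.
have n2 : xt != xt2 by rewrite lt_eqF.
set v' := fun k t => if P k == xt1 then (if k == k1 then b t - a t else 0)
   else if P k == xt then 0
   else if P k == xt2 then (if k == k2 then c t - b t else 0) else v k t.
set a0' := fun t => a0 t - \sum_(k < K) v k t * ck w k + \sum_(k < K) v' k t * ck w k.
set c0' := fun t => c0 t + \sum_(k < K) v k t * ck w k * P k - \sum_(k < K) v' k t * ck w k * P k.
exists v', a0', c0'.
have G1 : forall t, \sum_(k < K | P k == xt1) v' k t = b t - a t.
  move=> t; rewrite (bigD1 k1) //= big1 ?addr0; first by rewrite /v' hk1 eqxx.
  by move=> k /andP [hk hne]; rewrite /v' hk (negbTE hne).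
have G0 : forall t, \sum_(k < K | P k == xt) v' k t = 0.
  move=> t; apply: big1 => k hk; rewrite /v' (eqP hk) eq_sym (negbTE n1) eqxx //.
have G2 : forall t, \sum_(k < K | P k == xt2) v' k t = c t - b t.
  move=> t; rewrite (bigD1 k2) //= big1 ?addr0.
    by rewrite /v' (eqP hk2) eq_sym (negbTE n12) eq_sym (negbTE n2) eqxx eqxx.
  move=> k /andP [hk hne]; rewrite /v' (eqP hk) eq_sym (negbTE n12) eq_sym (negbTE n2) eqxx.
  by rewrite (negbTE hne).
have Grest : forall k, (P k != xt1) && (P k != xt) && (P k != xt2) -> v' k = v k.
  move=> k /andP [/andP [r1 r2] r3]; apply: funext => t.
  by rewrite /v' (negbTE r1) (negbTE r2) (negbTE r3).
have Dif : forall x t, net w bb v' a0' c0' x t =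
    f x t + \sum_(k < K) (v' k t - v k t) * Num.max 0 (x - P k).
  move=> x t.
  have DS : \sum_(k < K) (v' k t - v k t) * Num.max 0 (x - P k) =
     \sum_(k < K) v' k t * Num.max 0 (x - P k) - \sum_(k < K) v k t * Num.max 0 (x - P k).
    by rewrite -sumrB; apply: eq_bigr => k _; ring.
  rewrite DS hf !net_dec // -/P /a0' /c0'; ring.
have grp : forall p t x, \sum_(k < K | P k == p) (v' k t - v k t) * Num.max 0 (x - P k)
    = (\sum_(k < K | P k == p) v' k t - S p t) * Num.max 0 (x - p).
  move=> p t x; rewrite /S -sumrB mulr_suml; apply: eq_bigr => k /eqP ->; by [].
have Dsplit : forall x t, \sum_(k < K) (v' k t - v k t) * Num.max 0 (x - P k) =
   (b t - a t - S xt1 t) * Num.max 0 (x - xt1) + (0 - S xt t) * Num.max 0 (x - xt)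
   + (c t - b t - S xt2 t) * Num.max 0 (x - xt2).
  move=> x t.
  rewrite (split3 P (fun k => (v' k t - v k t) * Num.max 0 (x - P k)) n1 n12 n2).
  rewrite !grp G1 G0 G2 big1 ?addr0 // => k hk.
  by rewrite Grest // subrr mul0r.
have ex1 : xt1 = xt - q * (xt2 - xt) by rewrite hq; ring.
split.
  apply: funext => x; apply: funext => t.
  rewrite Dif Dsplit.
  have [HS1 HS HS2 V1 V2] := key t.
  rewrite HS1 HS HS2 /remove_knot.
  have chord : f xt2 t - f xt1 t = b t * (xt2 - xt1).
    rewrite (V2 xt2); last by apply/andP; split; lra.
    rewrite (V1 xt); last by apply/andP; split; lra.
    rewrite ex1; ring.
  case: (ltP x xt1) => hx1 /=.
    rewrite !max0_neg; [ring|lra|lra|lra].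
  case: (leP x xt2) => hx2 /=; last first.
    rewrite !max0_pos; [|lra|lra|lra].
    rewrite ex1; ring.
  rewrite chord mulrCA divfK; last by apply/eqP; lra.
  case: (leP x xt) => hx.
    rewrite (V1 x); last by apply/andP; split.
    rewrite (max0_pos (y := x - xt1)); last lra.
    rewrite (max0_neg (y := x - xt)); last lra.
    rewrite (max0_neg (y := x - xt2)); last lra.
    ring.
  rewrite (V2 x); last by apply/andP; split; [apply: ltW|].
  rewrite (V1 xt); last by apply/andP; split; lra.
  rewrite (max0_pos (y := x - xt1)); last lra.
  rewrite (max0_pos (y := x - xt)); last lra.
  rewrite (max0_neg (y := x - xt2)); last lra.
  ring.
have Z : forall k t, (P k == xt1) && (k != k1) || (P k == xt) || (P k == xt2) && (k != k2) -> v' k t = 0.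
  move=> k t /orP [/orP [/andP [hk hne]|hk]|/andP [hk hne]].
  - by rewrite /v' hk (negbTE hne).
  - by rewrite /v' (eqP hk) eq_sym (negbTE n1) eqxx.
  - by rewrite /v' (eqP hk) eq_sym (negbTE n12) eq_sym (negbTE n2) eqxx (negbTE hne).
have nz : forall k, (P k == xt1) && (k != k1) || (P k == xt) || (P k == xt2) && (k != k2) ->
   norm2 (v' k) = 0.
  move=> k hk; rewrite (norm2_ext _ (fun _ => 0)) ?norm2_zero // => t; exact: Z.
have C1 : \sum_(k < K | P k == xt1) norm2 (v' k) = norm2 (fun t => b t - a t).
  rewrite (bigD1 k1) //= big1 ?addr0.
    by congr norm2; apply: funext => t; rewrite /v' hk1 eqxx.
  by move=> k /andP [hk hne]; apply: nz; rewrite hk hne.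
have C0 : \sum_(k < K | P k == xt) norm2 (v' k) = 0.
  by apply: big1 => k hk; apply: nz; rewrite hk orbT.
have C2 : \sum_(k < K | P k == xt2) norm2 (v' k) = norm2 (fun t => c t - b t).
  rewrite (bigD1 k2) //= big1 ?addr0.
    congr norm2; apply: funext => t.
    by rewrite /v' (eqP hk2) eq_sym (negbTE n12) eq_sym (negbTE n2) eqxx eqxx.
  by move=> k /andP [hk hne]; apply: nz; rewrite hk hne orbT.
have Cr : \sum_(k < K | (P k != xt1) && (P k != xt) && (P k != xt2)) norm2 (v' k) =
          \sum_(k < K | (P k != xt1) && (P k != xt) && (P k != xt2)) norm2 (v k).
  by apply: eq_bigr => k hk; rewrite Grest.
have L : forall p (u : 'I_T -> R), (forall t, S p t = u t) ->
    norm2 u <= \sum_(k < K | P k == p) norm2 (v k).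
  move=> p u hu; rewrite -(norm2_ext _ _ hu).
  exact: (norm2_sum _ (index_enum 'I_K) (fun k => P k == p) v).
have L1 := L xt1 (fun t => b t + d t - a t) (fun t => let: And5 h _ _ _ _ := key t in h).
have L0 := L xt (fun t => (b t - q * d t) - (b t + d t)) (fun t => let: And5 _ h _ _ _ := key t in h).
have L2 := L xt2 (fun t => c t - (b t - q * d t)) (fun t => let: And5 _ _ h _ _ := key t in h).
rewrite (split3 P (fun k => norm2 (v' k)) n1 n12 n2) (split3 P (fun k => norm2 (v k)) n1 n12 n2).
rewrite C1 C0 C2 Cr /gapv.
lra.
Qed.

End Main.

Theorem lemma1 (R : realType) (K T N : nat)
  (xs : 'I_N -> R) (ys : 'I_N -> 'I_T -> R) (f : R -> 'I_T -> R)
  (xt xt1 xt2 : R) (a b c d : 'I_T -> R) :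
  (forall i j : 'I_N, (i < j)%N -> xs i < xs j) ->
  (forall t, cpwl (fun x => f x t)) ->
  (forall i t, f (xs i) t = ys i t) ->
  (exists i j : 'I_N, val j = (val i).+1 /\ xs i < xt < xs j) ->
  fknot f xt ->
  xt1 < xt -> xt < xt2 -> fknot f xt1 -> fknot f xt2 ->
  (forall p, fknot f p -> xt1 < p < xt2 -> p = xt) ->
  let tau := (xt - xt1) / (xt2 - xt1) in
  (forall t, slope_left (fun x => f x t) xt1 (a t)) ->
  (forall t, slope_on (fun x => f x t) xt1 xt (b t + d t)) ->
  (forall t, slope_on (fun x => f x t) xt xt2 (b t - tau / (1 - tau) * d t)) ->
  (forall t, slope_right (fun x => f x t) xt2 (c t)) ->
  (repcost K (remove_knot f xt1 xt2) <= repcost K f)%E /\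
  ((repcost K f < +oo)%E ->
   ~ aligned (fun t => a t - b t) (fun t => b t - c t) ->
   (repcost K (remove_knot f xt1 xt2) < repcost K f)%E).
Proof.
move=> _ _ _ _ kn h1 h2 kn1 kn2 _ tau hA hB hC hD.
set q := (xt - xt1) / (xt2 - xt).
have n21 : xt2 - xt1 != 0 by apply/eqP; lra.
have n2 : xt2 - xt != 0 by apply/eqP; lra.
have e1 : 1 - tau = (xt2 - xt) / (xt2 - xt1) by rewrite /tau; field; rewrite ?n21 ?n2.
have htq : tau / (1 - tau) = q.
  rewrite e1 /tau /q; field. by rewrite n2 n21.
have hC' : forall t, slope_on (fun x => f x t) xt xt2 (b t - q * d t).
  by move=> t; rewrite -htq; exact: hC.
have hq : q * (xt2 - xt) = xt - xt1 by rewrite /q divfK.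
have qpos : 0 < q by rewrite /q divr_gt0 //; lra.
have [g0 galign] := gap_lemma a b c d q qpos.
set g := remove_knot f xt1 xt2.
have bound : forall (w bb : 'I_K -> R) (v : 'I_K -> 'I_T -> R) (a0 c0 : 'I_T -> R),
      (forall k, `|w k| = 1) -> f = net w bb v a0 c0 ->
    (exists t, d t != 0) /\ (repcost K g + (gapv a b c d q)%:E <= (\sum_(k < K) norm2 (v k))%:E)%E.
  move=> w bb v a0 c0 hw hf.
  have [dnz [v' [a0' [c0' [hg hc]]]]] := construct h1 h2 hq kn kn1 kn2 hA hB hC' hD hw hf.
  split => //.
  have hle : (repcost K g <= (\sum_(k < K) norm2 (v' k))%:E)%E.
    by apply: ereal_inf_lbound; exists w, bb, v', a0', c0'.
  apply: le_trans (leeD hle (lexx _)) _.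
  by rewrite -EFinD lee_fin.
have g_ge0 : (0 <= repcost K g)%E.
  apply: le_ereal_inf_tmp => y [w [bb [v [a0 [c0 [hw [hf ->]]]]]]].
  by rewrite lee_fin; apply: sumr_ge0 => k _; apply: norm2_ge0.
split.
  apply: le_ereal_inf_tmp => y [w [bb [v [a0 [c0 [hw [hf ->]]]]]]].
  have [_ hb] := bound w bb v a0 c0 hw hf.
  apply: le_trans hb.
  by rewrite leeDl // lee_fin.
move=> hfin hna.
have [y0 [w0 [bb0 [v0 [a00 [c00 [hw0 [hf0 _]]]]]]] _] := ereal_inf_lt hfin.
have [dnz _] := bound w0 bb0 v0 a00 c00 hw0 hf0.
have gpos : 0 < gapv a b c d q.
  rewrite lt_neqAle g0 andbT eq_sym; apply/eqP => h; exact: hna (galign h dnz).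
have hb : (repcost K g + (gapv a b c d q)%:E <= repcost K f)%E.
  apply: le_ereal_inf_tmp => y [w [bb [v [a0 [c0 [hw [hf ->]]]]]]].
  by have [_ ->] := bound w bb v a0 c0 hw hf.
move: hb g_ge0; case: (repcost K g) => [r| |] hb hr0 //.
- apply: lt_le_trans hb; rewrite -EFinD lte_fin; lra.
- move: hb; rewrite addye // leye_eq => /eqP hinf.
  by move: hfin; rewrite hinf ltxx.
Qed.
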